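(* Let $C$ be a normal closed cone with nonempty interior in a real Banach space. Let $f:\operatorname{int} C \to \operatorname{int} C$ be order-preserving and homogeneous. Let $x, u \in \operatorname{int} C$ with $\|u\| = 1$ and let $0 < \theta < 1$. Then the following are equivalent: (a) $\limsup_{k\to\infty} d_H(f^k(x), u)^{1/k} \le \theta$; (b) there is $\lambda > 0$ such that $\limsup_{k\to\infty} d_T\big(f^k(x)/r_C(f)^k, \lambda u\big)^{1/k} \le \theta$; (c) there is $\lambda > 0$ such that $\limsup_{k\to\infty} \big\| f^k(x)/r_C(f)^k - \lambda u \big\|^{1/k} \le \theta$; (d) $\limsup_{k\to\infty} \big\| f^k(x)/\|f^k(x)\| - u \big\|^{1/k} \le \theta$.
   Context: A closed cone is a closed convex set $C \subset X$ with $\lambda C \subset C$ for $\lambda \ge 0$ and $C \cap (-C) = \{0\}$; $x\le y$ means $y-x\in C$. $C$ is normal if there is $\kappa > 0$ with $\|x\| \le \kappa\|y\|$ whenever $0 \le x \le y$. $f$ is order-preserving if $x\le y\Rightarrow f(x)\le f(y)$ and homogeneous if $f(tx)=tf(x)$ for $t>0$. For $x,y \in \operatorname{int} C$: $M(x/y) := \inf\{\beta>0 : x \le \beta y\}$, $m(x/y) := \sup\{\alpha>0 : \alpha y \le x\}$; Thompson's metric $d_T(x,y) = \max\{\log M(x/y), \log M(y/x)\}$; Hilbert's projective metric $d_H(x,y) = \log(M(x/y)/m(x/y))$. The cone spectral radius is $r_C(f) = \limsup_{k\to\infty}\|f^k(y)\|^{1/k}$ for any $y \in \operatorname{int} C$.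 *)

(* Defs.v *)
From mathcomp Require Import all_boot all_order all_algebra.
From mathcomp Require Import all_classical all_reals all_analysis.
Set Implicit Arguments. Unset Strict Implicit. Unset Printing Implicit Defensive.
Import Order.TTheory GRing.Theory Num.Theory.
Import numFieldNormedType.Exports.
Local Open Scope classical_set_scope.
Local Open Scope ring_scope.

Section Cones.
Variables (R : realType) (X : normedModType R).

Definition closed_cone (C : set X) : Prop :=
  [/\ closed C,
      (forall x y (t : R), C x -> C y -> 0 <= t <= 1 -> C (t *: x + (1 - t) *: y)),
      (forall (l : R) x, 0 <= l -> C x -> C (l *: x)) &
      (forall x, C x -> C (- x) -> x = 0)].

Definition cone_le (C : set X) (x y : X) : Prop := C (y - x).

Definition normal_cone (C : set X) : Prop :=
  exists kappa : R, 0 < kappa /\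
    forall x y, cone_le C 0 x -> cone_le C x y -> `|x| <= kappa * `|y|.

Definition order_preserving (C : set X) (f : X -> X) : Prop :=
  forall x y, interior C x -> interior C y -> cone_le C x y -> cone_le C (f x) (f y).

Definition homogeneous (C : set X) (f : X -> X) : Prop :=
  forall (t : R) x, interior C x -> 0 < t -> f (t *: x) = t *: f x.

Definition Mxy (C : set X) (x y : X) : R :=
  inf [set b : R | 0 < b /\ cone_le C x (b *: y)].
Definition mxy (C : set X) (x y : X) : R :=
  sup [set a : R | 0 < a /\ cone_le C (a *: y) x].

Definition thompson (C : set X) (x y : X) : R :=
  Num.max (ln (Mxy C x y)) (ln (Mxy C y x)).
Definition hilbert (C : set X) (x y : X) : R :=
  ln (Mxy C x y / mxy C x y).

Definition limsup_root (a : nat -> R) : \bar R :=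
  limn_esup (fun k => ((a k) `^ (k%:R)^-1)%:E).

(* cone spectral radius r_C(f) = limsup ||f^k(y)||^{1/k}, y an (arbitrarily chosen)
   interior point of C *)
Definition cone_spectral_radius (C : set X) (f : X -> X) : \bar R :=
  limsup_root (fun k => `|iter k f (xget 0 (interior C))|).

End Cones.

(* Main.v *)
Require Import Defs.
From mathcomp Require Import all_boot all_order all_algebra.
From mathcomp Require Import all_classical all_reals all_analysis.
Import Order.TTheory GRing.Theory Num.Theory.
Import numFieldNormedType.Exports.
Local Open Scope classical_set_scope.
Local Open Scope ring_scope.
From mathcomp Require Import ring lra.
Set Implicit Arguments. Unset Strict Implicit. Unset Printing Implicit Defensive.

Section Seq.
Variable R : realType.
Implicit Types (a b : nat -> R) (th c : R).

Definition evtly (P : nat -> Prop) := exists N, forall k, (N <= k)%N -> P k.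
Definition G a th := forall th', th < th' -> evtly (fun k => a k <= th' ^+ k).

Lemma evtly_and {P Q : nat -> Prop} : evtly P -> evtly Q -> evtly (fun k => P k /\ Q k).
Proof.
move=> [N1 H1] [N2 H2]; exists (maxn N1 N2) => k Hk; split.
  by apply: H1; rewrite (leq_trans _ Hk) // leq_maxl.
by apply: H2; rewrite (leq_trans _ Hk) // leq_maxr.
Qed.

Lemma evtly_mono {P Q : nat -> Prop} : (forall k, P k -> Q k) -> evtly P -> evtly Q.
Proof. by move=> PQ [N H]; exists N => k /H /PQ. Qed.

Lemma evtly_shift {P : nat -> Prop} : evtly P -> evtly (fun k => P k.+1).
Proof. by move=> [N H]; exists N => k Hk; apply: H; rewrite (leq_trans Hk). Qed.

Lemma powk_small (q c : R) : 0 < c -> 0 <= q < 1 -> evtly (fun k => q ^+ k <= c).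
Proof.
move=> c0 /andP[q0 q1].
have := @cvg_expr R q.
rewrite ger0_norm // => /(_ q1) /cvgrPdist_lt /(_ c c0).
move=> [N _ HN]. exists N => k Nk.
have := HN k Nk. rewrite /= sub0r normrN ger0_norm ?exprn_ge0 // => /ltW. done.
Qed.

Lemma G_transfer a b th c : 0 < th -> 0 < c -> G b th ->
  evtly (fun k => a k <= c * b k) -> G a th.
Proof.
move=> th0 c0 Gb ev th' thth'.
pose t2 := (th + th') / 2.
have t2a : th < t2 by rewrite /t2 ltr_pdivlMr // mulrDr mulr1 ltrD2l.
have t2b : t2 < th' by rewrite /t2 ltr_pdivrMr // mulrDr mulr1 ltrD2r.
have t20 : 0 < t2 by apply: lt_trans t2a.
have th'0 : 0 < th' by apply: lt_trans t2b.
have q01 : 0 <= t2 / th' < 1.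
  by rewrite divr_ge0 ?ltW //= ltr_pdivrMr // mul1r.
have := powk_small (ltac:(by rewrite invr_gt0) : 0 < c^-1) q01.
move=> sm; have := evtly_and (evtly_and sm ev) (Gb _ t2a).
apply: evtly_mono => k [[H1 H2] H3].
apply: (le_trans H2).
apply: (le_trans (ler_wpM2l (ltW c0) H3)).
rewrite expr_div_n ler_pdivrMr ?exprn_gt0 // in H1.
have := ler_wpM2l (ltW c0) H1.
by rewrite mulrA mulfV ?gt_eqF // mul1r.
Qed.

Lemma G_small a th c : 0 < th -> th < 1 -> 0 < c -> G a th -> evtly (fun k => a k <= c).
Proof.
move=> th0 th1 c0 Ga.
pose t2 := (th + 1) / 2.
have t2a : th < t2 by rewrite /t2 ltr_pdivlMr // mulrDr mulr1 ltrD2l.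
have t2b : t2 < 1 by rewrite /t2 ltr_pdivrMr // mulrDr mulr1 ltrD2r.
have q01 : 0 <= t2 < 1 by rewrite t2b andbT ltW // (lt_trans th0).
have := evtly_and (Ga _ t2a) (powk_small c0 q01).
by apply: evtly_mono => k [H1 H2]; apply: le_trans H2.
Qed.

Lemma G_le a b th : (forall k, a k <= b k) -> G b th -> G a th.
Proof.
move=> ab Gb th' H; apply: evtly_mono (Gb _ H) => k; exact: le_trans.
Qed.
End Seq.

Section Limsup.
Variable R : realType.
Implicit Types (a b : nat -> R) (th c : R).
Local Open Scope ereal_scope.

Lemma esup_le (u : nat -> \bar R) (l : \bar R) : evtly (fun k => u k <= l) -> limn_esup u <= l.
Proof.
move=> [N HN]; rewrite /limn_esup /limf_esup.
apply: (le_trans (ereal_inf_lbound _)).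
  exists [set k | (N <= k)%N]; first by exists N.
  reflexivity.
by apply: ge_ereal_sup => _ [k Hk <-]; apply: HN.
Qed.

Lemma esup_lt (u : nat -> \bar R) (l : \bar R) : limn_esup u < l -> evtly (fun k => u k < l).
Proof.
rewrite /limn_esup /limf_esup => /ereal_inf_lt [_ [V [N _ HN] <-]] H.
exists N => k Nk; apply: le_lt_trans H.
by apply: ereal_sup_ubound; exists k => //; apply: HN.
Qed.

Lemma esup_ge (u : nat -> \bar R) (l : \bar R) : evtly (fun k => l <= u k) -> l <= limn_esup u.
Proof.
move=> [N HN]; rewrite /limn_esup /limf_esup.
apply: le_ereal_inf_tmp => _ [V [M _ HM] <-].
apply: (le_trans (HN (maxn N M) (leq_maxl _ _))).
by apply: ereal_sup_ubound; exists (maxn N M) => //; apply: HM; rewrite /= leq_maxr.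
Qed.

Lemma root_pow (t : R) (k : nat) : (0 <= t)%R -> (0 < k)%N -> ((t ^+ k) `^ (k%:R)^-1 = t)%R.
Proof.
move=> t0 k0; rewrite -powR_mulrn // -powRrM mulfV ?powRr1 //.
by rewrite pnatr_eq0 -lt0n.
Qed.

Lemma pow_root (t : R) (k : nat) : (0 <= t)%R -> (0 < k)%N -> ((t `^ (k%:R)^-1) ^+ k = t)%R.
Proof.
move=> t0 k0; rewrite -powR_mulrn ?powR_ge0 // -powRrM mulVf ?powRr1 //.
by rewrite pnatr_eq0 -lt0n.
Qed.

Lemma powR_mono (r x y : R) : (0 <= r)%R -> (0 <= x)%R -> (x <= y)%R -> (x `^ r <= y `^ r)%R.
Proof.
move=> r0 x0 xy; apply: (ge0_ler_powR r0) => //; rewrite nnegrE //.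
exact: le_trans xy.
Qed.

Lemma G_of_limsup a th : (0 < th)%R -> limsup_root a <= th%:E -> G a th.
Proof.
move=> th0 H th' thth'.
have th'0 : (0 < th')%R by apply: lt_trans thth'.
have := esup_lt (le_lt_trans H (_ : th%:E < th'%:E)).
rewrite lte_fin => /(_ thth') ev.
have ev1 : evtly (fun k => (0 < k)%N) by exists 1%N.
apply: evtly_mono (evtly_and ev ev1) => k [Hk k0].
rewrite lte_fin in Hk.
have [a0|a0] := leP 0%R (a k); last by apply: le_trans (ltW a0) _; rewrite exprn_ge0 // ltW.
rewrite -(pow_root a0 k0).
by apply: lerXn2r; rewrite ?nnegrE ?powR_ge0 ?ltW.
Qed.

Lemma limsup_of_G a th : (0 < th)%R -> (forall k, 0 <= a k)%R -> G a th -> limsup_root a <= th%:E.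
Proof.
move=> th0 a0 Ga; apply/lee_addgt0Pr => e e0.
have thth' : (th < th + e)%R by rewrite ltrDl.
have th'0 : (0 < th + e)%R by apply: lt_trans thth'.
have ev1 : evtly (fun k => (0 < k)%N) by exists 1%N.
apply: esup_le; apply: evtly_mono (evtly_and (Ga _ thth') ev1) => k [Hk k0].
rewrite -EFinD lee_fin -(root_pow (ltW th'0) k0).
by apply: powR_mono; rewrite ?invr_ge0 ?ler0n.
Qed.

Lemma limsup_ge_pow a t : (0 < t)%R -> evtly (fun k => t ^+ k <= a k)%R -> t%:E <= limsup_root a.
Proof.
move=> t0 ev.
have ev1 : evtly (fun k => (0 < k)%N) by exists 1%N.
apply: esup_ge; apply: evtly_mono (evtly_and ev ev1) => k [Hk k0].
rewrite lee_fin -{1}(root_pow (ltW t0) k0).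
by apply: powR_mono => //; rewrite ?invr_ge0 ?ler0n ?exprn_ge0 ?ltW.
Qed.
Lemma limsup_sandwich a (A B c D : R) : (0 < A)%R -> (0 < B)%R -> (0 < c)%R -> (0 < D)%R ->
  (forall k, A * c ^+ k <= a k)%R -> (forall k, a k <= B * D ^+ k)%R ->
  (c <= fine (limsup_root a) <= D)%R.
Proof.
move=> A0 B0 c0 D0 lo hi.
have a0 k : (0 <= a k)%R by apply: le_trans (lo k); rewrite mulr_ge0 ?exprn_ge0 ?ltW.
have up : limsup_root a <= D%:E.
  apply: limsup_of_G => //.
  have GD : G (fun k => D ^+ k)%R D.
    move=> th' Dth'; exists 0%N => k _.
    by apply: lerXn2r; rewrite ?nnegrE ltW // (lt_trans D0).
  have ev : evtly (fun k => (a k <= B * D ^+ k)%R) by exists 0%N => k _; apply: hi.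
  exact: (G_transfer D0 B0 GD ev).
have low t : (0 < t < c)%R -> t%:E <= limsup_root a.
  move=> /andP[t0 tc]; apply: limsup_ge_pow => //.
  have q01 : (0 <= t / c < 1)%R by rewrite divr_ge0 ?ltW //= ltr_pdivrMr // mul1r.
  apply: evtly_mono (powk_small A0 q01) => k Hk.
  apply: le_trans (lo k).
  by rewrite expr_div_n ler_pdivrMr ?exprn_gt0 // mulrC in Hk.
have c20 : (0 < c / 2 < c)%R.
  by rewrite divr_gt0 //= ltr_pdivrMr // ltr_pMr // ltr1n.
move: up (low _ c20).
case E: (limsup_root a) => [l| |] //= up lw.
rewrite !lee_fin in up lw; rewrite up andbT.
rewrite leNgt; apply/negP => lc.
have l0 : (0 < l)%R by apply: lt_le_trans lw; case/andP: c20.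
have := low ((l + c) / 2)%R; rewrite E lee_fin.
have h1 : (0 < (l + c) / 2 < c)%R.
  apply/andP; split; first by rewrite divr_gt0 // addr_gt0.
  by rewrite ltr_pdivrMr // mulrDr mulr1 ltrD2r.
move=> /(_ h1); rewrite ler_pdivrMr // mulrDr mulr1 lerD2l.
by rewrite leNgt lc.
Qed.
End Limsup.

Section Cone.
Variables (R : realType) (X : normedModType R) (C : set X).
Hypothesis hC : closed_cone C.
Variable e0 : X.
Hypothesis e0nz : e0 != 0.

Lemma CZ l x : 0 <= l -> C x -> C (l *: x).
Proof. by case: hC => _ _ H _; apply: H. Qed.

Lemma CD x y : C x -> C y -> C (x + y).
Proof.
case: hC => _ Hc _ _ Cx Cy.
have := Hc x y (1/2) Cx Cy.
have h2 : 0 <= (1/2 : R) <= 1.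
  by rewrite divr_ge0 //= ler_pdivrMr // mul1r ler1n.
move=> /(_ h2) H.
have e2 : (1 - 1/2 : R) = 1/2 by rewrite {1}(splitr 1) addrK.
rewrite e2 -scalerDr div1r in H.
have := CZ (_ : 0 <= 2) H; rewrite ?ler0n // => /(_ isT).
by rewrite scalerA mulfV ?pnatr_eq0 // scale1r.
Qed.

Lemma C_antisym x : C x -> C (- x) -> x = 0.
Proof. by case: hC => _ _ _ H; apply: H. Qed.

Lemma C0 x : C x -> C 0.
Proof. by move=> Cx; have := CZ (lexx 0) Cx; rewrite scale0r. Qed.

Lemma le_trans_c x y z : cone_le C x y -> cone_le C y z -> cone_le C x z.
Proof.
rewrite /cone_le => H1 H2; have := CD H2 H1.
by rewrite addrA subrK.
Qed.

Lemma le_scale_c t x y : 0 <= t -> cone_le C x y -> cone_le C (t *: x) (t *: y).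
Proof. by rewrite /cone_le -scalerBr; apply: CZ. Qed.

Lemma le_refl_c x y : C y -> cone_le C x x.
Proof. by rewrite /cone_le subrr; apply: C0. Qed.

Lemma le_antisym_c x y : cone_le C x y -> cone_le C y x -> x = y.
Proof.
rewrite /cone_le => H1 H2; apply/eqP; rewrite -subr_eq0; apply/eqP.
by apply: C_antisym => //; rewrite opprB.
Qed.

Lemma le_scal_c a b v : C v -> a <= b -> cone_le C (a *: v) (b *: v).
Proof. by move=> Cv ab; rewrite /cone_le -scalerBl; apply: CZ; rewrite // subr_ge0. Qed.

Lemma ab_le a b v y : C v -> v != 0 -> cone_le C (a *: v) y -> cone_le C y (b *: v) -> a <= b.
Proof.
move=> Cv vnz H1 H2; have H := le_trans_c H1 H2.
rewrite /cone_le -scalerBl in H.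
rewrite leNgt; apply/negP => ba.
have H' : C (- ((b - a) *: v)).
  by rewrite -scaleNr opprB; apply: CZ => //; rewrite subr_ge0 ltW.
have := C_antisym H H'; move/eqP; rewrite scaler_eq0 (negbTE vnz) orbF subr_eq0.
by move/eqP => E; rewrite E ltxx in ba.
Qed.

Lemma int_C y : interior C y -> C y.
Proof. exact: nbhs_singleton. Qed.

Lemma int_ball y : interior C y -> exists2 e : R, 0 < e & forall w, `|w| < e -> C (y + w).
Proof.
move=> /nbhs_ballP [e e0' He]; exists e => // w Hw; apply: He.
by rewrite -ball_normE /ball_ /= opprD addrA subrr add0r normrN.
Qed.

Lemma int_scale t y : 0 < t -> interior C y -> interior C (t *: y).
Proof.
move=> t0 /int_ball [e e0' He]; apply/nbhs_ballP; exists (t * e); first by rewrite /= mulr_gt0.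
move=> z; rewrite -ball_normE /ball_ /= => Hz.
have -> : z = t *: (y + (t^-1 *: z - y)).
  by rewrite addrC subrK scalerA mulfV ?gt_eqF // scale1r.
apply: CZ; first exact: ltW.
apply: He; rewrite -(ltr_pM2l t0) -[t in t * _]ger0_norm ?ltW // -normrZ.
by rewrite scalerBr scalerA mulfV ?gt_eqF // scale1r distrC.
Qed.

Lemma int_ne0 y : interior C y -> y != 0.
Proof.
move=> Iy; apply/negP => /eqP y0; subst y.
move: Iy => /int_ball [e ep He].
pose t := e / (2 * `|e0|).
have n0 : 0 < `|e0| by rewrite normr_gt0.
have t0 : 0 < t by rewrite divr_gt0 // mulr_gt0.
have Ht : `|t *: e0| < e.
  rewrite normrZ gtr0_norm // /t.
  have -> : e / (2 * `|e0|) * `|e0| = e / 2 by field; rewrite gt_eqF.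
  lra.
have H1 := He _ Ht.
have H2 : C (0 + - (t *: e0)) by apply: He; rewrite normrN.
rewrite add0r in H1; rewrite add0r in H2; have := C_antisym H1 H2.
by move/eqP; rewrite scaler_eq0 (negbTE e0nz) orbF gt_eqF.
Qed.

Lemma dominate v y : interior C v -> exists2 b : R, 0 < b & cone_le C y (b *: v).
Proof.
move=> /int_ball [e ep He].
pose t := e / (2 * (`|y| + 1)).
have n0 : 0 < `|y| + 1 by rewrite ltr_pwDr // normr_ge0.
have t0 : 0 < t by rewrite divr_gt0 // mulr_gt0.
exists t^-1; first by rewrite invr_gt0.
have Ht : `|- (t *: y)| < e.
  rewrite normrN normrZ gtr0_norm // /t.
  have -> : e / (2 * (`|y| + 1)) * `|y| = (e / 2) * (`|y| / (`|y| + 1)).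
    by field; rewrite gt_eqF.
  have : `|y| / (`|y| + 1) < 1 by rewrite ltr_pdivrMr // mul1r ltrDl.
  have : 0 <= `|y| / (`|y| + 1) by rewrite divr_ge0 // ltW.
  nra.
have H := He _ Ht.
have := CZ (_ : 0 <= t^-1) H; rewrite invr_ge0 ltW // => /(_ isT).
by rewrite /cone_le scalerDr scalerN scalerA mulVf ?gt_eqF // scale1r.
Qed.

Lemma dominate_below v y : interior C v -> interior C y ->
  exists2 a : R, 0 < a & cone_le C (a *: v) y.
Proof.
move=> Iv Iy; have [b b0 H] := dominate v Iy.
exists b^-1; first by rewrite invr_gt0.
have := le_scale_c (_ : 0 <= b^-1) H; rewrite invr_ge0 ltW // => /(_ isT).
by rewrite scalerA mulVf ?gt_eqF // scale1r.
Qed.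

Lemma Mxy_ub y v b : 0 < b -> cone_le C y (b *: v) -> Mxy C y v <= b.
Proof.
move=> b0 H; apply: ge_inf; last by split.
by exists 0 => z [z0 _]; apply: ltW.
Qed.

Lemma Mxy_glb y v c : interior C v ->
  (forall b, 0 < b -> cone_le C y (b *: v) -> c <= b) -> c <= Mxy C y v.
Proof.
move=> Iv H; apply: lb_le_inf.
  by have [b b0 Hb] := dominate y Iv; exists b.
by move=> b [b0 Hb]; apply: H.
Qed.

Lemma mxy_lub y v c : interior C y -> interior C v ->
  (forall a, 0 < a -> cone_le C (a *: v) y -> a <= c) -> mxy C y v <= c.
Proof.
move=> Iy Iv H; apply: ge_sup.
  by have [a a0 Ha] := dominate_below Iv Iy; exists a.
by move=> a [a0 Ha]; apply: H.
Qed.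

Lemma mxy_hasub y v : interior C v ->
  has_ubound [set a : R | 0 < a /\ cone_le C (a *: v) y].
Proof.
move=> Iv; have [b b0 Hb] := dominate y Iv.
exists b => a [a0 Ha]; apply: (ab_le (int_C Iv) (int_ne0 Iv) Ha Hb).
Qed.

Lemma mxy_lb y v a : interior C v -> 0 < a -> cone_le C (a *: v) y -> a <= mxy C y v.
Proof.
by move=> Iv a0 H; apply: (ub_le_sup (mxy_hasub y Iv)).
Qed.

Lemma mxy_pos y v : interior C y -> interior C v -> 0 < mxy C y v.
Proof.
move=> Iy Iv; have [a a0 Ha] := dominate_below Iv Iy.
by apply: (lt_le_trans a0); apply: mxy_lb.
Qed.

Lemma m_le_M y v : interior C y -> interior C v -> mxy C y v <= Mxy C y v.
Proof.
move=> Iy Iv; apply: Mxy_glb => // b b0 Hb.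
apply: mxy_lub => // a a0 Ha.
exact: (ab_le (int_C Iv) (int_ne0 Iv) Ha Hb).
Qed.

Lemma Mxy_pos y v : interior C y -> interior C v -> 0 < Mxy C y v.
Proof. by move=> Iy Iv; apply: (lt_le_trans (mxy_pos Iy Iv)); apply: m_le_M. Qed.

Lemma M_attain y v : interior C v -> cone_le C y (Mxy C y v *: v).
Proof.
move=> Iv; case: hC => clC _ _ _; apply: clC => B /nbhs_ballP [e e0' He].
have n0 : 0 < `|v| + 1 by rewrite ltr_pwDr // normr_ge0.
have hi : has_inf [set b : R | 0 < b /\ cone_le C y (b *: v)].
  split; first by have [b b0 Hb] := dominate y Iv; exists b.
  by exists 0 => z [z0 _]; apply: ltW.
have ep : 0 < e / (`|v| + 1) by rewrite divr_gt0.
have [b [b0 Hb] bl] := inf_adherent ep hi.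
exists (b *: v - y); split => //; apply: He.
rewrite -ball_normE /ball_ /=.
have Mb : Mxy C y v <= b by apply: Mxy_ub.
have -> : Mxy C y v *: v - y - (b *: v - y) = (Mxy C y v - b) *: v.
  by rewrite scalerBl opprB addrA subrK.
rewrite normrZ ler0_norm ?subr_le0 // opprB.
move: bl; rewrite -/(Mxy C y v) -ltrBlDl => bl.
have : (b - Mxy C y v) * (`|v| + 1) < e by rewrite -ltr_pdivlMr.
have : 0 <= b - Mxy C y v by rewrite subr_ge0.
have := normr_ge0 v.
nra.
Qed.

Lemma m_attain y v : interior C y -> interior C v -> cone_le C (mxy C y v *: v) y.
Proof.
move=> Iy Iv; case: hC => clC _ _ _; apply: clC => B /nbhs_ballP [e e0' He].
have n0 : 0 < `|v| + 1 by rewrite ltr_pwDr // normr_ge0.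
have hs : has_sup [set a : R | 0 < a /\ cone_le C (a *: v) y].
  split; last exact: mxy_hasub.
  by have [a a0 Ha] := dominate_below Iv Iy; exists a.
have ep : 0 < e / (`|v| + 1) by rewrite divr_gt0.
have [a [a0 Ha] al] := sup_adherent ep hs.
exists (y - a *: v); split => //; apply: He.
rewrite -ball_normE /ball_ /=.
have am : a <= mxy C y v by apply: mxy_lb.
have -> : y - mxy C y v *: v - (y - a *: v) = (a - mxy C y v) *: v.
  by rewrite scalerBl opprB addrC addrA subrK addrC.
rewrite normrZ ler0_norm ?subr_le0 // opprB.
move: al; rewrite -/(mxy C y v) ltrBlDr -ltrBlDl => al.
have : (mxy C y v - a) * (`|v| + 1) < e by rewrite -ltr_pdivlMr.
have : 0 <= mxy C y v - a by rewrite subr_ge0.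
have := normr_ge0 v.
nra.
Qed.

Lemma hilbert_ge0 y v : interior C y -> interior C v -> 0 <= hilbert C y v.
Proof.
move=> Iy Iv; rewrite /hilbert; apply: ln_ge0.
by rewrite ler_pdivlMr ?mxy_pos // mul1r m_le_M.
Qed.

Lemma hilbert_le y v a b : interior C y -> interior C v -> 0 < a ->
  cone_le C (a *: v) y -> cone_le C y (b *: v) -> hilbert C y v <= ln (b / a).
Proof.
move=> Iy Iv a0 Ha Hb.
have ab : a <= b := ab_le (int_C Iv) (int_ne0 Iv) Ha Hb.
have b0 : 0 < b by apply: lt_le_trans ab.
have m0 := mxy_pos Iy Iv; have M0 := Mxy_pos Iy Iv.
rewrite /hilbert ler_ln ?posrE ?divr_gt0 //.
have Mb : Mxy C y v <= b by apply: Mxy_ub.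
have am : a <= mxy C y v by apply: mxy_lb.
apply: (le_trans (ler_wpM2r _ Mb)); first by rewrite invr_ge0 ltW.
by rewrite ler_pM2l // lef_pV2 ?posrE.
Qed.

Lemma thompson_ge0 y v : interior C y -> interior C v -> 0 <= thompson C y v.
Proof.
move=> Iy Iv.
have M1 := Mxy_pos Iy Iv; have M2 := Mxy_pos Iv Iy.
have H1 := M_attain y Iv; have H2 := M_attain v Iy.
have H3 := le_trans_c H1 (le_scale_c (ltW M1) H2).
rewrite scalerA in H3.
have h1 : 1 <= Mxy C y v * Mxy C v y.
  apply: (ab_le (int_C Iy) (int_ne0 Iy) _ H3).
  by rewrite scale1r; apply: (le_refl_c _ (int_C Iy)).
have := ln_ge0 h1; rewrite lnM ?posrE // => h.
rewrite /thompson le_max.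
case: (leP 0 (ln (Mxy C y v))) => //= hl.
by apply/ltW; move: h hl; clear; lra.
Qed.

End Cone.

Section Orbit.
Variables (R : realType) (X : normedModType R) (C : set X) (f : X -> X) (x u : X) (theta kappa : R).
Hypotheses (hC : closed_cone C) (kap0 : 0 < kappa)
  (hnorm : forall x y, cone_le C 0 x -> cone_le C x y -> `|x| <= kappa * `|y|)
  (hne : interior C !=set0) (hfi : forall y, interior C y -> interior C (f y))
  (hop : order_preserving C f) (hhom : homogeneous C f)
  (Ix : interior C x) (Iu : interior C u) (nu : `|u| = 1) (th0 : 0 < theta) (th1 : theta < 1).

Local Notation r := (fine (cone_spectral_radius C f)).

Lemma unz : u != 0.
Proof. by rewrite -normr_eq0 nu oner_neq0. Qed.

Lemma iter_int z k : interior C z -> interior C (iter k f z).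
Proof. by move=> Iz; elim: k => [|k IH] //=; apply: hfi. Qed.

Lemma step_lo v y a : interior C v -> interior C y -> 0 < a ->
  cone_le C (a *: v) y -> cone_le C (a *: f v) (f y).
Proof.
move=> Iv Iy a0 H; have := hop (int_scale hC a0 Iv) Iy H.
by rewrite hhom.
Qed.

Lemma step_hi v y b : interior C v -> interior C y -> 0 < b ->
  cone_le C y (b *: v) -> cone_le C (f y) (b *: f v).
Proof.
move=> Iv Iy b0 H; have := hop Iy (int_scale hC b0 Iv) H.
by rewrite hhom.
Qed.

Lemma norm_sand w z al be : C w -> C z -> 0 <= al -> 0 <= be ->
  cone_le C (al *: w) z -> cone_le C z (be *: w) ->
  al * `|w| <= kappa * `|z| /\ `|z| <= kappa * (be * `|w|).
Proof.
move=> Cw Cz al0 be0 H1 H2; split.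
  rewrite -(ger0_norm al0) -normrZ; apply: hnorm => //.
  by rewrite /cone_le subr0; apply: CZ.
rewrite -(ger0_norm be0) -normrZ; apply: hnorm => //.
by rewrite /cone_le subr0.
Qed.

Lemma r_pos : 0 < r.
Proof.
set y0 := xget 0 (interior C).
have Iy0 : interior C y0 by apply: xgetPex.
have [c c0 Hc] := dominate_below hC Iy0 (hfi Iy0).
have [D D0 HD] := dominate hC (f y0) Iy0.
have lo k : cone_le C (c ^+ k *: y0) (iter k f y0).
  elim: k => [|k IH]; first by rewrite expr0 scale1r; apply: (le_refl_c hC _ (int_C Iy0)).
  rewrite iterS; apply: (le_trans_c hC _ (step_lo Iy0 (iter_int k Iy0) (exprn_gt0 _ c0) IH)).
  by rewrite exprSr -scalerA; apply: le_scale_c => //; rewrite exprn_ge0 // ltW.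
have hi k : cone_le C (iter k f y0) (D ^+ k *: y0).
  elim: k => [|k IH]; first by rewrite expr0 scale1r; apply: (le_refl_c hC _ (int_C Iy0)).
  rewrite iterS; apply: (le_trans_c hC (step_hi Iy0 (iter_int k Iy0) (exprn_gt0 _ D0) IH)).
  by rewrite exprSr -scalerA; apply: le_scale_c => //; rewrite exprn_ge0 // ltW.
have ny0 : 0 < `|y0| by rewrite normr_gt0 (int_ne0 hC unz Iy0).
have := @limsup_sandwich R (fun k => `|iter k f y0|) (`|y0| / kappa) (kappa * `|y0|) c D.
rewrite divr_gt0 // mulr_gt0 // => /(_ isT isT c0 D0).
have ns k := norm_sand (int_C Iy0) (int_C (iter_int k Iy0)) (exprn_ge0 k (ltW c0))
   (exprn_ge0 k (ltW D0)) (lo k) (hi k).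
have l1 : forall k, `|y0| / kappa * c ^+ k <= `|iter k f y0|.
  move=> k; have [h _] := ns k.
  by rewrite mulrAC ler_pdivrMr // mulrC [_ * kappa]mulrC.
have l2 : forall k, `|iter k f y0| <= kappa * `|y0| * D ^+ k.
  by move=> k; have [_ h] := ns k; rewrite -mulrA [`|y0| * _]mulrC.
move=> /(_ l1 l2) /andP[h _].
by apply: lt_le_trans h.
Qed.

Lemma int_zk k : interior C ((r ^+ k)^-1 *: iter k f x).
Proof.
apply: (int_scale hC); last exact: iter_int.
by rewrite invr_gt0 exprn_gt0 // r_pos.
Qed.

Lemma ln_le_M y v t : interior C y -> interior C v -> ln (Mxy C y v) <= t ->
  Mxy C y v <= expR t.
Proof.
move=> Iy Iv h; have M0 := Mxy_pos hC unz Iy Iv.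
by rewrite -(lnK (_ : Mxy C y v \in Num.pos)) ?posrE // ler_expR.
Qed.

Lemma bc lam : 0 < lam ->
  G (fun k => thompson C ((r ^+ k)^-1 *: iter k f x) (lam *: u)) theta ->
  G (fun k => `|(r ^+ k)^-1 *: iter k f x - lam *: u|) theta.
Proof.
move=> lam0 Gt.
have c0 : 0 < (3 * kappa + 1) * lam by rewrite mulr_gt0 // addr_gt0 // mulr_gt0.
have h2 : 0 < 1/2 :> R by rewrite divr_gt0.
apply: (G_transfer th0 c0 Gt).
apply: evtly_mono (G_small th0 th1 h2 Gt) => k tk.
have Iz := int_zk k.
have Iw : interior C (lam *: u) by apply: (int_scale hC).
move: tk.
set z := (r ^+ k)^-1 *: iter k f x. set w := lam *: u.
set t := thompson C z w => tk.
have t0 : 0 <= t by apply: (thompson_ge0 hC unz).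
have l1 : ln (Mxy C z w) <= t by rewrite /t /thompson le_max lexx.
have l2 : ln (Mxy C w z) <= t by rewrite /t /thompson le_max lexx orbT.
have M1 := ln_le_M Iz Iw l1; have M2 := ln_le_M Iw Iz l2.
set E := expR t.
have E0 : 0 < E by apply: expR_gt0.
have H1 : cone_le C z (E *: w).
  exact: (le_trans_c hC (M_attain hC z Iw) (le_scal_c hC (int_C Iw) M1)).
have H2 : cone_le C w (E *: z).
  exact: (le_trans_c hC (M_attain hC w Iz) (le_scal_c hC (int_C Iz) M2)).
have H3 : cone_le C (E^-1 *: w) z.
  have := le_scale_c hC (_ : 0 <= E^-1) H2; rewrite invr_ge0 ltW // => /(_ isT).
  by rewrite [E^-1 *: (E *: z)]scalerA mulVf ?gt_eqF // scale1r.
set F := E^-1.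
have Cd : cone_le C 0 (z - F *: w) by rewrite /cone_le subr0.
have Hd : cone_le C (z - F *: w) ((E - F) *: w).
  rewrite /cone_le scalerBl opprB addrA subrK; exact: H1.
have nd := hnorm Cd Hd.
have EF : E * F = 1 by rewrite mulfV ?gt_eqF.
have F1 : 1 - t <= F by rewrite /F /E -expRN; have := expR_ge1Dx (- t); rewrite -/(1 - t).
have E1 : 1 + t <= E by apply: expR_ge1Dx.
have Eup : E <= 1 + 2 * t.
  have : E * (1 - t) <= 1 by rewrite -[X in _ <= X]EF; apply: ler_wpM2l => //; apply: ltW.
  move: tk t0; nra.
have nw : `|w| = lam by rewrite /w normrZ nu mulr1 gtr0_norm.
rewrite normrZ nw in nd.
have EFp : 0 <= E - F by move: E1 F1 Eup t0 tk EF; nra.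
rewrite ger0_norm // in nd.
have -> : z - w = (z - F *: w) - (1 - F) *: w.
  by rewrite scalerBl scale1r opprB addrA subrK.
apply: (le_trans (ler_normB _ _)).
rewrite normrZ nw.
have F1p : 0 <= 1 - F by move: E1 F1 Eup t0 tk EF; nra.
rewrite ger0_norm //.
have k1 : kappa * ((E - F) * lam) <= kappa * ((3 * t) * lam).
  rewrite ler_pM2l // ler_pM2r //; move: E1 F1 Eup t0 tk EF; nra.
have k2 : (1 - F) * lam <= t * lam by rewrite ler_pM2r //; move: F1; lra.
move: nd k1 k2; nra.
Qed.

Lemma cd lam : 0 < lam ->
  G (fun k => `|(r ^+ k)^-1 *: iter k f x - lam *: u|) theta ->
  G (fun k => `|(`|iter k f x|)^-1 *: iter k f x - u|) theta.
Proof.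
move=> lam0 Gc.
have c0 : 0 < 4 / lam by rewrite divr_gt0.
have h2 : 0 < lam / 2 by rewrite divr_gt0.
apply: (G_transfer th0 c0 Gc).
apply: evtly_mono (G_small th0 th1 h2 Gc) => k.
have s0 : 0 < (r ^+ k)^-1 by rewrite invr_gt0 exprn_gt0 // r_pos.
move: s0.
set s := (r ^+ k)^-1. set y := iter k f x. set z := s *: y.
set e := `|z - lam *: u| => s0 ek.
have nlu : `|lam *: u| = lam by rewrite normrZ nu mulr1 gtr0_norm.
have dd : `| `|z| - lam| <= e by rewrite -nlu; apply: ler_dist_dist.
have nzlo : lam - e <= `|z|.
  by move: dd; rewrite ler_norml => /andP[h _]; lra.
have nz0 : 0 < `|z| by lra.
have nzE : `|z| = s * `|y| by rewrite /z normrZ gtr0_norm.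
have ny0 : 0 < `|y|.
  by rewrite nzE in nz0; rewrite -(pmulr_rgt0 _ s0).
have -> : `|y|^-1 *: y - u = `|z|^-1 *: (z - `|z| *: u).
  have e1 : (s * `|y|)^-1 * s = `|y|^-1 by field; rewrite ?gt_eqF.
  have e2 : (s * `|y|)^-1 * (s * `|y|) = 1 by field; rewrite ?gt_eqF.
  by rewrite nzE /z scalerBr !scalerA e1 e2 scale1r.
rewrite normrZ gtr0_norm ?invr_gt0 //.
have A : `|z - `|z| *: u| <= e + e.
  have -> : z - `|z| *: u = (z - lam *: u) + (lam - `|z|) *: u.
    by rewrite scalerBl addrA subrK.
  apply: (le_trans (ler_normD _ _)); rewrite lerD2l normrZ nu mulr1 distrC //.
rewrite mulrC ler_pdivrMr //.
have e0 : 0 <= e by apply: normr_ge0.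
have L : lam * lam^-1 = 1 by rewrite mulfV ?gt_eqF.
rewrite /= mulrAC.
have : 2 * e <= (lam / 2) * (4 / lam * e).
  have -> : lam / 2 * (4 / lam * e) = 2 * e * (lam / lam) by field; rewrite gt_eqF.
  by rewrite mulfV ?gt_eqF // mulr1.
have : lam / 2 * (4 / lam * e) <= `|z| * (4 / lam * e).
  by apply: ler_wpM2r; [rewrite mulr_ge0 // ltW | lra].
lra.
Qed.

Lemma ball_pm rho dl w : 0 < rho -> (forall w', `|w'| < rho -> C (u + w')) ->
  0 <= dl -> `|w| <= dl * rho / 2 -> C (dl *: u + w) /\ C (dl *: u - w).
Proof.
move=> rho0 He dl0 hw.
have [dle|dlp] := eqVneq dl 0.
  rewrite dle !mul0r in hw; rewrite dle.
  have w0 : w = 0.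
    by apply/normr0_eq0/eqP; rewrite eq_le normr_ge0 andbT.
  rewrite w0 scale0r addr0 subr0; split; exact: (C0 hC (int_C Iu)).
have dl0' : 0 < dl by rewrite lt_def dlp dl0.
have hw' : `|dl^-1 *: w| < rho.
  rewrite normrZ gtr0_norm ?invr_gt0 // mulrC ltr_pdivrMr //.
  apply: (le_lt_trans hw).
  have : 0 < dl * rho by rewrite mulr_gt0.
  lra.
have eq1 : dl *: u + w = dl *: (u + dl^-1 *: w).
  by rewrite scalerDr scalerA mulfV // scale1r.
have eq2 : dl *: u - w = dl *: (u + - (dl^-1 *: w)).
  by rewrite scalerDr scalerN scalerA mulfV // scale1r.
rewrite eq1 eq2; split; apply: (CZ hC) => //; apply: He => //.
by rewrite normrN.
Qed.

Lemma da :
  G (fun k => `|(`|iter k f x|)^-1 *: iter k f x - u|) theta ->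
  G (fun k => hilbert C (iter k f x) u) theta.
Proof.
move=> Gd.
have [rho rho0 He] := int_ball Iu.
have c0 : 0 < 8 / rho by rewrite divr_gt0.
have h2 : 0 < rho / 4 by rewrite divr_gt0.
apply: (G_transfer th0 c0 Gd).
apply: evtly_mono (G_small th0 th1 h2 Gd) => k.
have Iy := iter_int k Ix.
move: Iy; set y := iter k f x => Iy.
have ny0 : 0 < `|y| by rewrite normr_gt0 (int_ne0 hC unz Iy).
set v := `|y|^-1 *: y.
set e := `|v - u| => ek.
have e0 : 0 <= e by apply: normr_ge0.
set dl := 2 * e / rho.
have dl0 : 0 <= dl by rewrite /dl; apply: divr_ge0; [apply: mulr_ge0 | apply: ltW].
have dl2 : dl <= 1/2.
  by rewrite /dl ler_pdivrMr // ; lra.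
have hw : `|v - u| <= dl * rho / 2.
  rewrite /dl -/e; have -> : 2 * e / rho * rho / 2 = e by field; rewrite gt_eqF.
  by [].
have [P1 P2] := ball_pm rho0 He dl0 hw.
have yv : y = `|y| *: v by rewrite /v scalerA mulfV ?gt_eqF // scale1r.
have lo : cone_le C ((`|y| * (1 - dl)) *: u) y.
  rewrite {2}yv -scalerA; apply: (le_scale_c hC); first exact: ltW.
  by rewrite /cone_le scalerBl scale1r opprB addrCA.
have hi : cone_le C y ((`|y| * (1 + dl)) *: u).
  rewrite {1}yv -scalerA; apply: (le_scale_c hC); first exact: ltW.
  rewrite /cone_le scalerDl scale1r.
  by move: P2; rewrite opprB addrA [dl *: u + u]addrC.
have a0 : 0 < `|y| * (1 - dl) by rewrite mulr_gt0 //; lra.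
apply: (le_trans (hilbert_le hC unz Iy Iu a0 lo hi)).
have -> : `|y| * (1 + dl) / (`|y| * (1 - dl)) = 1 + (2 * dl / (1 - dl)).
  by field; rewrite gt_eqF //; lra.
apply: (le_trans (le_ln1Dx _)).
  have : 0 <= 2 * dl / (1 - dl) by rewrite divr_ge0 //; lra.
  lra.
rewrite ler_pdivrMr; last lra.
have : 8 / rho * e = 4 * dl by rewrite /dl; field; rewrite gt_eqF.
nra.
Qed.

Local Notation yk k := (iter k f x).
Local Notation Mk k := (Mxy C (iter k f x) u).
Local Notation mk k := (mxy C (iter k f x) u).

Lemma Mk_pos k : 0 < Mk k.
Proof. exact: (Mxy_pos hC unz (iter_int k Ix) Iu). Qed.
Lemma mk_pos k : 0 < mk k.
Proof. exact: (mxy_pos hC unz (iter_int k Ix) Iu). Qed.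
Lemma lo_k k : cone_le C (mk k *: u) (yk k).
Proof. exact: (m_attain hC unz (iter_int k Ix) Iu). Qed.
Lemma hi_k k : cone_le C (yk k) (Mk k *: u).
Proof. exact: (M_attain hC _ Iu). Qed.
Lemma lo_k1 k : cone_le C (mk k *: f u) (yk k.+1).
Proof. by rewrite iterS; apply: step_lo => //; [exact: iter_int | exact: mk_pos | exact: lo_k]. Qed.
Lemma hi_k1 k : cone_le C (yk k.+1) (Mk k *: f u).
Proof. by rewrite iterS; apply: step_hi => //; [exact: iter_int | exact: Mk_pos | exact: hi_k]. Qed.

Lemma scale_inv_le a v w : 0 < a -> cone_le C (a *: v) w -> cone_le C v (a^-1 *: w).
Proof.
move=> a0 H; have := le_scale_c hC (_ : 0 <= a^-1) H; rewrite invr_ge0 ltW // => /(_ isT).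
by rewrite scalerA mulVf ?gt_eqF // scale1r.
Qed.

Lemma scale_inv_ge a v w : 0 < a -> cone_le C w (a *: v) -> cone_le C (a^-1 *: w) v.
Proof.
move=> a0 H; have := le_scale_c hC (_ : 0 <= a^-1) H; rewrite invr_ge0 ltW // => /(_ isT).
by rewrite scalerA mulVf ?gt_eqF // scale1r.
Qed.

Lemma eig : G (fun k => hilbert C (yk k) u) theta -> exists2 mu, 0 < mu & f u = mu *: u.
Proof.
move=> Gh.
have Is := hfi Iu.
set P := Mxy C (f u) u; set Q := mxy C (f u) u.
have P0 : 0 < P by apply: (Mxy_pos hC unz).
have Q0 : 0 < Q by apply: (mxy_pos hC unz).
have key k : ln (P / Q) <= hilbert C (yk k) u + hilbert C (yk k.+1) u.
  have H1 : cone_le C (f u) ((Mk k.+1 / mk k) *: u).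
    rewrite mulrC -scalerA; apply: scale_inv_le; first exact: mk_pos.
    exact: (le_trans_c hC (lo_k1 k) (hi_k k.+1)).
  have H2 : cone_le C ((mk k.+1 / Mk k) *: u) (f u).
    rewrite mulrC -scalerA; apply: scale_inv_ge; first exact: Mk_pos.
    exact: (le_trans_c hC (lo_k k.+1) (hi_k1 k)).
  have b0 : 0 < Mk k.+1 / mk k by rewrite divr_gt0 ?Mk_pos ?mk_pos.
  have a0 : 0 < mk k.+1 / Mk k by rewrite divr_gt0 ?Mk_pos ?mk_pos.
  have hP : P <= Mk k.+1 / mk k := Mxy_ub b0 H1.
  have hQ : mk k.+1 / Mk k <= Q := mxy_lb hC unz Iu a0 H2.
  rewrite /hilbert -lnM ?posrE ?divr_gt0 ?Mk_pos ?mk_pos //.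
  rewrite ler_ln ?posrE ?divr_gt0 ?mulr_gt0 ?Mk_pos ?mk_pos //.
  have -> : Mk k / mk k * (Mk k.+1 / mk k.+1) = (Mk k.+1 / mk k) / (mk k.+1 / Mk k).
    by field; rewrite !gt_eqF ?Mk_pos ?mk_pos.
  apply: (le_trans (ler_wpM2r _ hP)); first by rewrite invr_ge0 ltW.
  rewrite ler_pM2l ?divr_gt0 ?Mk_pos ?mk_pos // lef_pV2 ?posrE ?divr_gt0 ?Mk_pos ?mk_pos ?invr_gt0 //.
  - by rewrite invr_gt0 mk_pos.
  - by rewrite invr_gt0 mk_pos.
have PQ : P <= Q.
  rewrite leNgt; apply/negP => QP.
  have d0 : 0 < ln (P / Q) by apply: ln_gt0; rewrite ltr_pdivlMr // mul1r.
  have d3 : 0 < ln (P / Q) / 3 by rewrite divr_gt0.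
  have ev := G_small th0 th1 d3 Gh.
  have [N HN] := evtly_and ev (evtly_shift ev).
  have [h1 h2] := HN N (leqnn N).
  have := key N; lra.
have QP : Q <= P by apply: (m_le_M hC unz).
have PQe : P = Q by apply/eqP; rewrite eq_le PQ QP.
exists P => //; apply: (le_antisym_c hC).
  exact: (M_attain hC _ Iu).
by rewrite PQe; apply: (m_attain hC unz).
Qed.

Lemma r_eq mu : 0 < mu -> f u = mu *: u -> r = mu.
Proof.
move=> mu0 fu.
set y0 := xget 0 (interior C).
have Iy0 : interior C y0 by apply: xgetPex.
have [a a0 Ha] := dominate_below hC Iu Iy0.
have [b b0 Hb] := dominate hC y0 Iu.
have lo k : cone_le C ((a * mu ^+ k) *: u) (iter k f y0).
  elim: k => [|k IH]; first by rewrite expr0 mulr1.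
  rewrite iterS; have := step_lo Iu (iter_int k Iy0) _ IH.
  by rewrite fu scalerA exprSr mulrA; apply; rewrite mulr_gt0 // exprn_gt0.
have hi k : cone_le C (iter k f y0) ((b * mu ^+ k) *: u).
  elim: k => [|k IH]; first by rewrite expr0 mulr1.
  rewrite iterS; have := step_hi Iu (iter_int k Iy0) _ IH.
  by rewrite fu scalerA exprSr mulrA; apply; rewrite mulr_gt0 // exprn_gt0.
have ns k := norm_sand (int_C Iu) (int_C (iter_int k Iy0))
   (ltW (mulr_gt0 a0 (exprn_gt0 k mu0))) (ltW (mulr_gt0 b0 (exprn_gt0 k mu0))) (lo k) (hi k).
have := @limsup_sandwich R (fun k => `|iter k f y0|) (a / kappa) (kappa * b) mu mu.
rewrite divr_gt0 // mulr_gt0 // => /(_ isT isT mu0 mu0).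
have l1 : forall k, a / kappa * mu ^+ k <= `|iter k f y0|.
  move=> k; have [h _] := ns k; rewrite nu mulr1 in h.
  by rewrite mulrAC ler_pdivrMr // [X in _ <= X]mulrC.
have l2 : forall k, `|iter k f y0| <= kappa * b * mu ^+ k.
  by move=> k; have [_ h] := ns k; rewrite nu mulr1 mulrA in h.
move=> /(_ l1 l2) h.
by apply/eqP; rewrite eq_le andbC.
Qed.

Lemma ab : G (fun k => hilbert C (yk k) u) theta ->
  exists2 lam : R, 0 < lam &
    G (fun k => thompson C ((r ^+ k)^-1 *: yk k) (lam *: u)) theta.
Proof.
move=> Gh.
have [mu mu0 fu] := eig Gh.
rewrite (r_eq mu0 fu).
have mup k : 0 < mu ^+ k by apply: exprn_gt0.
have mstep k : mk k * mu <= mk k.+1.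
  apply: (mxy_lb hC unz Iu); first by rewrite mulr_gt0 ?mk_pos.
  by rewrite -scalerA -fu; apply: lo_k1.
have Mstep k : Mk k.+1 <= Mk k * mu.
  apply: Mxy_ub; first by rewrite mulr_gt0 ?Mk_pos.
  by rewrite -scalerA -fu; apply: hi_k1.
pose p k := mk k / mu ^+ k.
pose q k := Mk k / mu ^+ k.
have p0 k : 0 < p k by rewrite /p divr_gt0 ?mk_pos.
have pinc : {homo p : n m / (n <= m)%N >-> n <= m}.
  apply/nondecreasing_seqP => k; rewrite /p exprSr.
  have -> : mk k / mu ^+ k = (mk k * mu) / (mu ^+ k * mu).
    by field; rewrite !gt_eqF.
  apply: ler_wpM2r; first by rewrite invr_ge0 mulr_ge0 // ltW.
  exact: mstep.
have qdec : {homo q : n m / (n <= m)%N >-> m <= n}.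
  apply/nonincreasing_seqP => k; rewrite /q exprSr.
  have -> : Mk k / mu ^+ k = (Mk k * mu) / (mu ^+ k * mu).
    by field; rewrite !gt_eqF.
  apply: ler_wpM2r; first by rewrite invr_ge0 mulr_ge0 // ltW.
  exact: Mstep.
have pq k : p k <= q k.
  rewrite /p /q; apply: ler_wpM2r; first by rewrite invr_ge0 ltW.
  exact: (m_le_M hC unz (iter_int k Ix) Iu).
have pq' i j : p i <= q j.
  apply: (le_trans (pinc _ _ (leq_maxl i j))).
  apply: (le_trans (pq _)); exact: qdec (leq_maxr i j).
pose lam := sup (range p).
have hub : has_ubound (range p) by exists (q 0%N) => _ [i _ <-]; apply: pq'.
have plam k : p k <= lam by apply: ub_le_sup => //; exists k.
have lamq k : lam <= q k.
  by apply: ge_sup; [exists (p 0%N), 0%N | move=> _ [i _ <-]; apply: pq'].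
have lam0 : 0 < lam by apply: lt_le_trans (plam 0%N).
exists lam => //.
apply: (G_le _ Gh) => k.
set z := (mu ^+ k)^-1 *: yk k.
have Iz : interior C z by apply: (int_scale hC); [rewrite invr_gt0 | exact: iter_int].
have Iw : interior C (lam *: u) by apply: (int_scale hC).
have hz : cone_le C z ((q k / lam) *: (lam *: u)).
  rewrite scalerA mulfVK ?gt_eqF // /q mulrC -scalerA.
  by apply: (le_scale_c hC); [rewrite invr_ge0 ltW | apply: hi_k].
have lz : cone_le C (lam *: u) ((lam / p k) *: z).
  have : cone_le C (p k *: u) z.
    rewrite /p mulrC -scalerA /z.
    by apply: (le_scale_c hC); [rewrite invr_ge0 ltW | apply: lo_k].
  move=> H; have := le_scale_c hC (_ : 0 <= lam / p k) H.
  rewrite divr_ge0 ?ltW // => /(_ isT).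
  by rewrite scalerA mulfVK ?gt_eqF.
have M1 := Mxy_ub (_ : 0 < q k / lam) hz.
have M2 := Mxy_ub (_ : 0 < lam / p k) lz.
have hqp : hilbert C (yk k) u = ln (q k / p k).
  rewrite /hilbert /p /q; congr ln; field.
  by rewrite !gt_eqF ?mk_pos.
have q0 : 0 < q k by rewrite /q divr_gt0 ?Mk_pos.
have p0k := p0 k.
have M1p : 0 < Mxy C z (lam *: u) := Mxy_pos hC unz Iz Iw.
have M2p : 0 < Mxy C (lam *: u) z := Mxy_pos hC unz Iw Iz.
have qlam : 0 < q k / lam by rewrite divr_gt0.
have lamp : 0 < lam / p k by rewrite divr_gt0.
have qp : 0 < q k / p k by rewrite divr_gt0.
rewrite hqp /thompson ge_max; apply/andP; split.
  rewrite ler_ln ?posrE //.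
  apply: (le_trans (M1 qlam)).
  by rewrite ler_pM2l // lef_pV2 ?posrE.
rewrite ler_ln ?posrE //.
apply: (le_trans (M2 lamp)).
by rewrite ler_pM2r ?invr_gt0.
Qed.
End Orbit.


Unset Implicit Arguments.

Theorem mainTheorem6 (R : realType) (X : completeNormedModType R)
  (C : set X) (f : X -> X) (x u : X) (theta : R) :
  closed_cone C -> normal_cone C -> interior C !=set0 ->
  (forall y, interior C y -> interior C (f y)) ->
  order_preserving C f -> homogeneous C f ->
  interior C x -> interior C u -> `|u| = 1 -> 0 < theta < 1 ->
  let r := fine (cone_spectral_radius C f) in
  [<-> (limsup_root (fun k => hilbert C (iter k f x) u)%R <= theta%:E)%E;
       exists2 lambda : R, 0 < lambda &
         (limsup_root (fun k => thompson C ((r ^+ k)^-1 *: iter k f x) (lambda *: u))%R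
            <= theta%:E)%E;
       exists2 lambda : R, 0 < lambda &
         (limsup_root (fun k => `|(r ^+ k)^-1 *: iter k f x - lambda *: u|)%R
            <= theta%:E)%E;
       (limsup_root (fun k => `|(Num.norm (iter k f x))^-1 *: iter k f x - u|)%R <= theta%:E)%E].
Proof.
move=> hC [kappa [kap0 hnorm]] hne hfi hop hhom Ix Iu nu /andP[th0 th1] r.
have unzu := unz nu.
tfae.
- move=> H1; have Gh := G_of_limsup th0 H1.
  have [lam lam0 Gt] := @ab _ _ _ _ _ _ _ kappa hC kap0 hnorm hne hfi hop hhom Ix Iu nu th0 th1 Gh.
  exists lam => //; apply: limsup_of_G => // k.
  apply: (thompson_ge0 hC unzu); first exact: (int_zk hC kap0 hnorm hne hfi hop hhom Ix nu).
  exact: (int_scale hC lam0 Iu).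
- move=> [lam lam0 H]; exists lam => //.
  apply: (limsup_of_G th0); first by move=> k; exact: normr_ge0.
  exact: (@bc _ _ _ _ _ _ _ kappa hC kap0 hnorm hne hfi hop hhom Ix Iu nu th0 th1 _ lam0 (G_of_limsup th0 H)).
- move=> [lam lam0 H].
  apply: (limsup_of_G th0); first by move=> k; exact: normr_ge0.
  exact: (@cd _ _ _ _ _ _ _ kappa hC kap0 hnorm hne hfi hop hhom nu th0 th1 _ lam0 (G_of_limsup th0 H)).
- move=> H.
  apply: (limsup_of_G th0).
    by move=> k; apply: (hilbert_ge0 hC unzu) => //; apply: iter_int.
  exact: (da hC hfi Ix Iu nu th0 th1 (G_of_limsup th0 H)).
Qed.
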